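(* Let $(i,k)\in\mathcal I_1$. Then $F_{st}F_{\ge(i,k)}=0$ for every $(s,t)\in\mathcal I_1$ with $(s,t)\succeq(i,k)$; equivalently, $F_{st}F_{>(i,k)}=0$ for every $(s,t)\in\mathcal I_1$ with $(s,t)\succ(i,k)$.
   Context: Let $m,n\ge 1$, let $q$ be an indeterminate, and let indices range over $[1,m+n]$. Put $q_i=q$ if $i\le m$ and $q_i=q^{-1}$ if $i>m$. Let $\mathcal I_0=\{(i,j):1\le i<j\le m \text{ or } m+1\le i<j\le m+n\}$, $\mathcal I_1=\{(i,j):1\le i\le m<j\le m+n\}$. The quantum supergroup $U_q=U_q(\mathfrak{gl}(m|n))$ is the associative $\mathbb C(q)$-superalgebra generated by $K_j^{\pm1}$ ($j\in[1,m+n]$) and $E_{i,i+1},F_{i,i+1}$ ($1\le i<m+n$), where $K_j^{\pm1}$ and $E_{i,i+1},F_{i,i+1}$ for $i\ne m$ are even and $E_{m,m+1},F_{m,m+1}$ are odd, subject to: $K_iK_j=K_jK_i$, $K_iK_i^{-1}=1$; $K_iE_{j,j+1}K_i^{-1}=q_i^{\delta_{ij}-\delta_{i,j+1}}E_{j,j+1}$, $K_iF_{j,j+1}K_i^{-1}=q_i^{-(\delta_{ij}-\delta_{i,j+1})}F_{j,j+1}$; $[E_{i,i+1},F_{j,j+1}]=\delta_{ij}\frac{K_iK_{i+1}^{-1}-K_i^{-1}K_{i+1}}{q_i-q_i^{-1}}$; $E_{m,m+1}^2=F_{m,m+1}^2=0$; $E_{i,i+1}E_{j,j+1}=E_{j,j+1}E_{i,i+1}$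 and $F_{i,i+1}F_{j,j+1}=F_{j,j+1}F_{i,i+1}$ for $|i-j|>1$; for $|i-j|=1$, $i\neq m$, and $X\in\{E,F\}$: $X_{i,i+1}^2X_{j,j+1}-(q+q^{-1})X_{i,i+1}X_{j,j+1}X_{i,i+1}+X_{j,j+1}X_{i,i+1}^2=0$; and $[E_{m-1,m+2},E_{m,m+1}]=[F_{m-1,m+2},F_{m,m+1}]=0$. Here for homogeneous $x,y$, $[x,y]=xy-(-1)^{\bar x\bar y}yx$. For $i<j$ with $j>i+1$, $E_{ij}=E_{ic}E_{cj}-q_c^{-1}E_{cj}E_{ic}$ and $F_{ij}=-q_cF_{ic}F_{cj}+F_{cj}F_{ic}$ for $i<c<j$ (independent of $c$); $E_{ij},F_{ij}$ are odd iff $(i,j)\in\mathcal I_1$. Order on $\mathcal I_1$: $(i,j)\prec(s,t)$ iff $j>t$, or $j=t$ and $i<s$. For $I\subseteq\mathcal I_1$, $F_I$ is the product of the $F_{ij}$, $(i,j)\in I$, taken in increasing $\prec$-order ($F_\emptyset=1$). For $(i,j)\in\mathcal I_1$, $F_{\ge(i,j)}$, $F_{>(i,j)}$, $F_{\le(i,j)}$, $F_{<(i,j)}$ denote $F_I$ for $I=\{(s,t)\in\mathcal I_1:(s,t)\succeq(i,j)\}$, $\{(s,t):(s,t)\succ(i,j)\}$, $\{(s,t):(s,t)\preceq(i,j)\}$, $\{(s,t):(s,t)\prec(i,j)\}$ respectively. *)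

(* Defs.v *)
From HB Require Import structures.
From mathcomp Require Import all_boot all_order all_algebra all_field.
Set Implicit Arguments. Unset Strict Implicit. Unset Printing Implicit Defensive.
Import Order.TTheory GRing.Theory Num.Theory.
Local Open Scope ring_scope.

(* Base field C(q): rational functions in an indeterminate q.
   (complex numbers are modelled by the algebraic complex numbers algC) *)
Definition Cq : fieldType := {fraction {poly algC}}.
Definition qq : Cq := FracField.tofrac ('X : {poly algC}).

Definition qi (m i : nat) : Cq := if (i <= m)%N then qq else qq^-1.

Section Uq.
Variables (m n : nat) (A : algType Cq).
(* generators: K j = K_j, Ki j = K_j^{-1}, E i = E_{i,i+1}, F i = F_{i,i+1} *)
Variables (K Ki E F : nat -> A).

(* E_{i,i+d+1}, defined with c = j-1 :
   E_{ij} = E_{ic} E_{cj} - q_c^{-1} E_{cj} E_{ic} *)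
Fixpoint Eaux (i d : nat) : A :=
  match d with
  | 0 => E i
  | d'.+1 => let c := (i + d'.+1)%N in
             Eaux i d' * E c - (qi m c)^-1 *: (E c * Eaux i d')
  end.
Fixpoint Faux (i d : nat) : A :=
  match d with
  | 0 => F i
  | d'.+1 => let c := (i + d'.+1)%N in
             - (qi m c *: (Faux i d' * F c)) + F c * Faux i d'
  end.
Definition Eij (i j : nat) : A := Eaux i (j - i - 1).
Definition Fij (i j : nat) : A := Faux i (j - i - 1).

Definition idx (j : nat) : bool := (1 <= j <= m + n)%N.
Definition sidx (i : nat) : bool := (1 <= i < m + n)%N.
Definition dist (i j : nat) : nat := (i - j + (j - i))%N.

(* Defining relations of U_q(gl(m|n)) for the images of the generators. *)
Definition Uq_rels : Prop :=
  (forall i j, idx i -> idx j -> K i * K j = K j * K i) /\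
      (forall i, idx i -> K i * Ki i = 1 /\ Ki i * K i = 1) /\
      (forall i j, idx i -> sidx j ->
         K i * E j * Ki i = qi m i ^ ((i == j)%:Z - (i == j.+1)%:Z) *: E j /\
         K i * F j * Ki i = qi m i ^ (- ((i == j)%:Z - (i == j.+1)%:Z)) *: F j) /\
      (forall i j, sidx i -> sidx j ->
         E i * F j - (if (i == m) && (j == m) then -1 else 1) *: (F j * E i) =
         (if i == j then (qi m i - (qi m i)^-1)^-1 *:
                           (K i * Ki i.+1 - Ki i * K i.+1) else 0)) /\
      (E m * E m = 0 /\ F m * F m = 0) /\
      (forall i j, sidx i -> sidx j -> (1 < dist i j)%N ->
         E i * E j = E j * E i /\ F i * F j = F j * F i) /\
      (forall i j, sidx i -> sidx j -> dist i j = 1%N -> i != m ->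
         E i * E i * E j - (qq + qq^-1) *: (E i * E j * E i) + E j * E i * E i = 0 /\
         F i * F i * F j - (qq + qq^-1) *: (F i * F j * F i) + F j * F i * F i = 0) /\
      ((1 < m)%N -> (1 < n)%N ->
         Eij m.-1 m.+2 * E m + E m * Eij m.-1 m.+2 = 0 /\
         Fij m.-1 m.+2 * F m + F m * Fij m.-1 m.+2 = 0).

Definition I1 (p : nat * nat) : bool := (1 <= p.1 <= m)%N && (m < p.2 <= m + n)%N.
Definition prec (p r : nat * nat) : bool :=
  (r.2 < p.2)%N || ((p.2 == r.2) && (p.1 < r.1)%N).
Definition preceq (p r : nat * nat) : bool := (p == r) || prec p r.
(* I_1 listed in increasing prec-order *)
Definition I1seq : seq (nat * nat) :=
  flatten [seq [seq (i, j) | i <- iota 1 m] | j <- rev (iota m.+1 n)].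
Definition Fprod (P : pred (nat * nat)) : A :=
  \prod_(p <- I1seq | P p) Fij p.1 p.2.
Definition Fge (p : nat * nat) : A := Fprod (fun r => preceq p r).
Definition Fgt (p : nat * nat) : A := Fprod (fun r => prec p r).
End Uq.

(* Main.v *)
Require Import Defs.
From HB Require Import structures.
From mathcomp Require Import all_boot all_order all_algebra all_field.
From mathcomp Require Import ring zify.
Import GRing.Theory.
Local Open Scope ring_scope.
Set Implicit Arguments. Unset Strict Implicit. Unset Printing Implicit Defensive.


Section NC.
Variable K : fieldType.
Variable A : algType K.
Inductive ne : Type :=
 | NAtom of nat | NZero | NOne | NAdd of ne & ne | NOpp of ne
 | NMul of ne & ne | NScale of K & ne.
Fixpoint den (env : seq A) (e : ne) : A := match e with
 | NAtom i => nth 0 env i | NZero => 0 | NOne => 1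
 | NAdd a b => den env a + den env b
 | NOpp a => - den env a | NMul a b => den env a * den env b
 | NScale c a => c *: den env a end.
Fixpoint wden (env : seq A) (w : seq nat) : A :=
  match w with [::] => 1 | i :: w' => nth 0 env i * wden env w' end.
Fixpoint lden (env : seq A) (l : seq (K * seq nat)) : A :=
  match l with [::] => 0 | p :: l' => p.1 *: wden env p.2 + lden env l' end.
Fixpoint napp (w1 w2 : seq nat) : seq nat :=
  match w1 with [::] => w2 | i :: w => i :: napp w w2 end.
Fixpoint lapp (l1 l2 : seq (K * seq nat)) :=
  match l1 with [::] => l2 | p :: l => p :: lapp l l2 end.
Fixpoint lscale (c : K) (l : seq (K * seq nat)) :=
  match l with [::] => [::] | p :: l' => (c * p.1, p.2) :: lscale c l' end.
Fixpoint lmulw (c : K) (w : seq nat) (l : seq (K * seq nat)) :=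
  match l with [::] => [::] | p :: l' => (c * p.1, napp w p.2) :: lmulw c w l' end.
Fixpoint lmul (l1 l2 : seq (K * seq nat)) :=
  match l1 with [::] => [::] | p :: l => lapp (lmulw p.1 p.2 l2) (lmul l l2) end.
Fixpoint norm (e : ne) : seq (K * seq nat) := match e with
 | NAtom i => [:: (1, [:: i])] | NZero => [::] | NOne => [:: (1, [::])]
 | NAdd a b => lapp (norm a) (norm b)
 | NOpp a => lscale (-1) (norm a)
 | NMul a b => lmul (norm a) (norm b)
 | NScale c a => lscale c (norm a) end.
Fixpoint weq (a b : seq nat) : bool := match a, b with
 | [::], [::] => true | x :: a', y :: b' => Nat.eqb x y && weq a' b' | _, _ => false end.
Fixpoint ins (p : K * seq nat) (l : seq (K * seq nat)) := match l with
 | [::] => [:: p]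
 | r :: l' => if weq p.2 r.2 then (p.1 + r.1, r.2) :: l' else r :: ins p l' end.
Fixpoint merge (l : seq (K * seq nat)) := match l with
 | [::] => [::] | p :: l' => ins p (merge l') end.
Fixpoint allz (l : seq (K * seq nat)) : Prop := match l with
 | [::] => True | p :: l' => p.1 = 0 /\ allz l' end.

Lemma wden_app env w1 w2 : wden env (napp w1 w2) = wden env w1 * wden env w2.
Proof. by elim: w1 => [|i w IH] /=; rewrite ?mul1r // IH mulrA. Qed.
Lemma lden_app env l1 l2 : lden env (lapp l1 l2) = lden env l1 + lden env l2.
Proof. by elim: l1 => [|p l IH] /=; rewrite ?add0r // IH addrA. Qed.
Lemma lden_scale env c l : lden env (lscale c l) = c *: lden env l.
Proof. by elim: l => [|p l IH] /=; rewrite ?scaler0 // IH scalerDr scalerA. Qed.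
Lemma lden_mulw env c w l : lden env (lmulw c w l) = c *: (wden env w * lden env l).
Proof.
elim: l => [|p l IH] /=; first by rewrite mulr0 scaler0.
by rewrite IH mulrDr scalerDr wden_app -scalerA scalerAr.
Qed.
Lemma lden_mul env l1 l2 : lden env (lmul l1 l2) = lden env l1 * lden env l2.
Proof.
elim: l1 => [|p l IH] /=; first by rewrite mul0r.
by rewrite lden_app lden_mulw IH mulrDl scalerAl.
Qed.
Lemma norm_ok env e : lden env (norm e) = den env e.
Proof.
elim: e.
- by move=> i /=; rewrite mulr1 scale1r addr0.
- by [].
- by rewrite /= scale1r addr0.
- by move=> a Ha b Hb /=; rewrite lden_app Ha Hb.
- by move=> a Ha /=; rewrite lden_scale Ha scaleN1r.
- by move=> a Ha b Hb /=; rewrite lden_mul Ha Hb.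
- by move=> c a Ha /=; rewrite lden_scale Ha.
Qed.
Lemma weqP a b : weq a b -> a = b.
Proof.
elim: a b => [|x a IH] [|y b] //= /andP[/PeanoNat.Nat.eqb_eq -> /IH -> //].
Qed.
Lemma lden_ins env p l : lden env (ins p l) = p.1 *: wden env p.2 + lden env l.
Proof.
elim: l => [|r l IH] //=.
case: ifP => [/weqP ->|_] /=; first by rewrite scalerDl addrA.
by rewrite IH addrCA.
Qed.
Lemma lden_merge env l : lden env (merge l) = lden env l.
Proof. by elim: l => [|p l IH] //=; rewrite lden_ins IH. Qed.
Lemma allz_ok env l : allz l -> lden env l = 0.
Proof. by elim: l => [|p l IH] //= [-> /IH ->]; rewrite scale0r addr0. Qed.
Lemma ncr_sound env e1 e2 : allz (merge (norm (NAdd e1 (NOpp e2)))) -> den env e1 = den env e2.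
Proof.
move=> /(allz_ok env); rewrite lden_merge norm_ok /= => /eqP.
by rewrite subr_eq0 => /eqP.
Qed.
End NC.

Ltac nc_lookup x env :=
  lazymatch env with
  | x :: _ => constr:(0%nat)
  | _ :: ?env' => let i := nc_lookup x env' in constr:(S i)
  end.
Ltac nc_mem x env :=
  lazymatch env with
  | nil => constr:(false)
  | x :: _ => constr:(true)
  | _ :: ?env' => nc_mem x env'
  end.
Ltac nc_collect t env :=
  lazymatch t with
  | (?a + ?b)%R => let env := nc_collect a env in nc_collect b env
  | (- ?a)%R => nc_collect a env
  | (?a * ?b)%R => let env := nc_collect a env in nc_collect b env
  | (?c *: ?a)%R => nc_collect a env
  | 0%R => env
  | 1%R => env
  | _ => let b := nc_mem t env in
         lazymatch b with true => env | false => constr:(t :: env) end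
  end.
Ltac nc_reify K t env :=
  lazymatch t with
  | (?a + ?b)%R => let x := nc_reify K a env in let y := nc_reify K b env in constr:(@NAdd K x y)
  | (- ?a)%R => let x := nc_reify K a env in constr:(@NOpp K x)
  | (?a * ?b)%R => let x := nc_reify K a env in let y := nc_reify K b env in constr:(@NMul K x y)
  | (?c *: ?a)%R => let x := nc_reify K a env in constr:(@NScale K c x)
  | 0%R => constr:(@NZero K)
  | 1%R => constr:(@NOne K)
  | _ => let i := nc_lookup t env in constr:(@NAtom K i)
  end.
Ltac ncring_pre :=
  lazymatch goal with
  | |- @eq ?T ?l ?r =>
    lazymatch goal with A : algType ?K |- _ =>
    let env := nc_collect l (@nil T) in
    let env := nc_collect r env in
    let el := nc_reify K l env in
    let er := nc_reify K r env in
    apply (@ncr_sound K A env el er);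
    cbv [allz merge ins weq Nat.eqb andb norm lmul lmulw lscale lapp napp fst snd] end
  end.


Section Pure.
Variable K : fieldType.
Variable A : algType K.
Definition br (X Y : A) (c : K) : A := - (c *: (X * Y)) + Y * X.
Lemma nc_eq0 (x y z : A) : x - y = z -> z = 0 -> x = y.
Proof. by move=> <- /eqP; rewrite subr_eq0 => /eqP. Qed.

Ltac z0 := rewrite ?(mulr0, mul0r, scaler0, addr0, add0r, oppr0).

Lemma sq0a (f X : A) (a s : K) : a != 0 -> 1 + a ^+ 2 != 0 -> s = a + a^-1 ->
  X * X = 0 -> f * f * X - s *: (f * X * f) + X * f * f = 0 ->
  br f X a * br f X a = 0.
Proof.
move=> ha ha2 -> h1 h2.
apply: (nc_eq0 (z := ((1%:R * a^+3) / (1%:R * 1 + 1%:R * a^+2)) *: (f * f * (X * X)) + (((-1%:R) * a^+3) / (1%:R * 1 + 1%:R * a^+2)) *: ((f * f * X - (a + a^-1) *: (f * X * f) + X * f * f) * X) + ((-1%:R) * a) *: (f * (X * X) * f) + (((-1%:R) * a) / (1%:R * 1 + 1%:R * a^+2)) *: (X * (f * f * X - (a + a^-1) *: (f * X * f) + X * f * f)) + ((1%:R * a) / (1%:R * 1 + 1%:R * a^+2)) *: ((X * X) * f * f))).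
  by rewrite /br; ncring_pre; repeat split; field; rewrite ?ha ?ha2.
by rewrite ?h1 ?h2; z0.
Qed.

Lemma sq0b (f X : A) (a s : K) : a != 0 -> 1 + a ^+ 2 != 0 -> s = a + a^-1 ->
  X * X = 0 -> f * f * X - s *: (f * X * f) + X * f * f = 0 ->
  br X f a * br X f a = 0.
Proof.
move=> ha ha2 -> h1 h2.
apply: (nc_eq0 (z := ((1%:R * a) / (1%:R * 1 + 1%:R * a^+2)) *: (f * f * (X * X)) + (((-1%:R) * a) / (1%:R * 1 + 1%:R * a^+2)) *: ((f * f * X - (a + a^-1) *: (f * X * f) + X * f * f) * X) + ((-1%:R) * a) *: (f * (X * X) * f) + (((-1%:R) * a^+3) / (1%:R * 1 + 1%:R * a^+2)) *: (X * (f * f * X - (a + a^-1) *: (f * X * f) + X * f * f)) + ((1%:R * a^+3) / (1%:R * 1 + 1%:R * a^+2)) *: ((X * X) * f * f))).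
  by rewrite /br; ncring_pre; repeat split; field; rewrite ?ha ?ha2.
by rewrite ?h1 ?h2; z0.
Qed.

Lemma g2base (y g b : A) (a s : K) : a != 0 -> 1 + a ^+ 2 != 0 -> s = a + a^-1 ->
  g * g * y - s *: (g * y * g) + y * g * g = 0 ->
  g * g * b - s *: (g * b * g) + b * g * g = 0 ->
  y * b = b * y ->
  g * br (br y g a) b a = br (br y g a) b a * g.
Proof.
move=> ha ha2 -> h1 h2 h3.
have h3' : y * b - b * y = 0 by rewrite h3 subrr.
apply: (nc_eq0 (z := ((1%:R * a^+3) / (1%:R * 1 + 1%:R * a^+2)) *: (y * (g * g * b - (a + a^-1) *: (g * b * g) + b * g * g)) + (((-1%:R) * a^+3) / (1%:R * 1 + 1%:R * a^+2)) *: ((g * g * y - (a + a^-1) *: (g * y * g) + y * g * g) * b) + (((-1%:R) * a^+3) / (1%:R * 1 + 1%:R * a^+2)) *: ((y * b - b * y) * g * g) + (1%:R * a) *: (g * (y * b - b * y) * g) + (((-1%:R) * a) / (1%:R * 1 + 1%:R * a^+2)) *: (g * g * (y * b - b * y)) + (((-1%:R) * a) / (1%:R * 1 + 1%:R * a^+2)) *: ((g * g * b - (a + a^-1) *: (g * b * g) + b * g * g) * y) + ((1%:R * a) / (1%:R * 1 + 1%:R * a^+2)) *: (b * (g * g * y - (a + a^-1) *: (g * y * g) + y * g * g)))).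
  by rewrite /br; ncring_pre; repeat split; field; rewrite ?ha ?ha2.
by rewrite ?h1 ?h2 ?h3'; z0.
Qed.

Lemma crossbase (y X b : A) (a : K) : a != 0 -> 
  X * X = 0 -> y * b = b * y ->
  X * br (br y X a) b a^-1 + br (br y X a) b a^-1 * X = 0 ->
  br y X a * br X b a^-1 = - (br X b a^-1 * br y X a) + (a - a^-1) *: (X * br (br y X a) b a^-1).
Proof.
move=> ha h1 h2 h3.
have h2' : y * b - b * y = 0 by rewrite h2 subrr.
apply: (nc_eq0 (z := ((-1%:R) * a) *: ((X * br (br y X a) b a^-1 + br (br y X a) b a^-1 * X)) + (1%:R * 1) *: (y * (X * X) * b) + ((-1%:R) * a^+2) *: (b * y * (X * X)) + (1%:R * 1) *: (b * (X * X) * y) + (((-1%:R) * 1) / (1%:R * a^+2)) *: ((X * X) * y * b))).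
  by rewrite /br; ncring_pre; repeat split; field; rewrite ?ha ?ha2.
by rewrite ?h1 ?h2' ?h3; z0.
Qed.

Lemma br_comm (Z X Y : A) (c e1 e2 : K) :
  Z * X = e1 *: (X * Z) -> Z * Y = e2 *: (Y * Z) ->
  Z * br X Y c = (e1 * e2) *: (br X Y c * Z).
Proof.
move=> h1 h2.
have h1' : Z * X - e1 *: (X * Z) = 0 by rewrite h1 subrr.
have h2' : Z * Y - e2 *: (Y * Z) = 0 by rewrite h2 subrr.
apply: (nc_eq0 (z := (-c) *: ((Z * X - e1 *: (X * Z)) * Y) + (-c*e1) *: (X * (Z * Y - e2 *: (Y * Z)))
   + (Z * Y - e2 *: (Y * Z)) * X + e2 *: (Y * (Z * X - e1 *: (X * Z))))).
  by rewrite /br; ncring_pre; repeat split; ring.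
by rewrite ?h1' ?h2'; z0.
Qed.

Lemma br_commL (Z X Y : A) (c e1 e2 : K) :
  X * Z = e1 *: (Z * X) -> Y * Z = e2 *: (Z * Y) ->
  br X Y c * Z = (e1 * e2) *: (Z * br X Y c).
Proof.
move=> h1 h2.
have h1' : X * Z - e1 *: (Z * X) = 0 by rewrite h1 subrr.
have h2' : Y * Z - e2 *: (Z * Y) = 0 by rewrite h2 subrr.
apply: (nc_eq0 (z := (-c) *: (X * (Y * Z - e2 *: (Z * Y))) + (-c*e2) *: ((X * Z - e1 *: (Z * X)) * Y)
   + Y * (X * Z - e1 *: (Z * X)) + e1 *: ((Y * Z - e2 *: (Z * Y)) * X))).
  by rewrite /br; ncring_pre; repeat split; ring.
by rewrite ?h1' ?h2'; z0.
Qed.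

Lemma serre_brX (f X Y : A) (c s : K) :
  f * f * X - s *: (f * X * f) + X * f * f = 0 -> f * Y = Y * f ->
  f * f * br X Y c - s *: (f * br X Y c * f) + br X Y c * f * f = 0.
Proof.
move=> h1 h2.
have h2' : f * Y - Y * f = 0 by rewrite h2 subrr.
pose S := f * f * X - s *: (f * X * f) + X * f * f.
pose D := f * Y - Y * f.
apply: (nc_eq0 (z := (-c) *: ((f * f * X - s *: (f * X * f) + X * f * f) * Y + s *: (f * X * (f * Y - Y * f))
   - X * (f * Y - Y * f) * f - X * f * (f * Y - Y * f)) +
   (Y * (f * f * X - s *: (f * X * f) + X * f * f) + f * (f * Y - Y * f) * X + (f * Y - Y * f) * f * X
    - s *: ((f * Y - Y * f) * X * f)))).
  by rewrite /br; ncring_pre; repeat split; ring.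
by rewrite ?h1 ?h2'; z0.
Qed.

Lemma serre_brY (f X Y : A) (c s : K) :
  f * f * Y - s *: (f * Y * f) + Y * f * f = 0 -> f * X = X * f ->
  f * f * br X Y c - s *: (f * br X Y c * f) + br X Y c * f * f = 0.
Proof.
move=> h1 h2.
have h2' : f * X - X * f = 0 by rewrite h2 subrr.
apply: (nc_eq0 (z := (-c) *: (X * (f * f * Y - s *: (f * Y * f) + Y * f * f) + f * (f * X - X * f) * Y
   + (f * X - X * f) * f * Y - s *: ((f * X - X * f) * Y * f)) +
   ((f * f * Y - s *: (f * Y * f) + Y * f * f) * X + s *: (f * Y * (f * X - X * f))
    - Y * (f * X - X * f) * f - Y * f * (f * X - X * f)))).
  by rewrite /br; ncring_pre; repeat split; ring.
by rewrite ?h1 ?h2'; z0.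
Qed.

Lemma cross_s (g G H X Y : A) (a k : K) :
  g * G = G * g -> g * H = H * g -> X * G + G * X - k *: (H * Y) = 0 ->
  br g X a * G = - (G * br g X a) + k *: (H * br g Y a).
Proof.
move=> h1 h2 h3.
have h1' : g * G - G * g = 0 by rewrite h1 subrr.
have h2' : g * H - H * g = 0 by rewrite h2 subrr.
apply: (nc_eq0 (z := (-a) *: (g * (X * G + G * X - k *: (H * Y))) + a *: ((g * G - G * g) * X)
  + (-(a*k)) *: ((g * H - H * g) * Y) + X * (g * G - G * g) + (X * G + G * X - k *: (H * Y)) * g)).
  by rewrite /br; ncring_pre; repeat split; ring.
by rewrite ?h1' ?h2' ?h3; z0.
Qed.

Lemma cross_k (Z f H X Y : A) (a k : K) :
  Z * f = f * Z -> H * f = f * H -> Z * X + X * Z - k *: (H * Y) = 0 ->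
  Z * br X f a = - (br X f a * Z) + k *: (H * br Y f a).
Proof.
move=> h1 h2 h3.
have h1' : Z * f - f * Z = 0 by rewrite h1 subrr.
have h2' : H * f - f * H = 0 by rewrite h2 subrr.
apply: (nc_eq0 (z := (-a) *: ((Z * X + X * Z - k *: (H * Y)) * f) + a *: (X * (Z * f - f * Z))
  + (Z * f - f * Z) * X + f * (Z * X + X * Z - k *: (H * Y)) + (-k) *: ((H * f - f * H) * Y))).
  by rewrite /br; ncring_pre; repeat split; ring.
by rewrite ?h1' ?h2' ?h3; z0.
Qed.
End Pure.
Section Pure2.
Variable K : fieldType.
Variable A : algType K.
Lemma br_assoc (f X g : A) (c d : K) : f * g = g * f ->
  br (br f X c) g d = br f (br X g d) c.
Proof.
move=> h; have h' : f * g - g * f = 0 by rewrite h subrr.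
apply: (nc_eq0 (z := (-d) *: (X * (f * g - g * f)) + c *: ((f * g - g * f) * X))).
  by rewrite /br; ncring_pre; repeat split; ring.
by rewrite h'; rewrite ?(mulr0, mul0r, scaler0, addr0, add0r, oppr0).
Qed.
Lemma br_comm1 (Z X Y : A) (c : K) : Z * X = X * Z -> Z * Y = Y * Z ->
  Z * br X Y c = br X Y c * Z.
Proof.
move=> h1 h2; rewrite (@br_comm _ _ Z X Y c 1 1) ?mulr1 ?scale1r //.
Qed.
End Pure2.
Section Pure3.
Variable K : fieldType.
Variable A : algType K.
Lemma colbase (f X : A) (a : K) : X * X = 0 -> X * br f X a = (-a) *: (br f X a * X).
Proof.
move=> h.
apply: (nc_eq0 (z := (X * X) * f + (-(a^+2)) *: (f * (X * X)))).
  by rewrite /br; ncring_pre; repeat split; ring.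
by rewrite h; rewrite ?(mulr0, mul0r, scaler0, addr0, add0r, oppr0).
Qed.
Lemma rowbase (X f : A) (a : K) : a != 0 -> X * X = 0 -> X * br X f a = (-a^-1) *: (br X f a * X).
Proof.
move=> ha h.
apply: (nc_eq0 (z := (-a) *: (X * X * f) + a^-1 *: (f * (X * X)))).
  by rewrite /br; ncring_pre; repeat split; field.
by rewrite h; rewrite ?(mulr0, mul0r, scaler0, addr0, add0r, oppr0).
Qed.
Lemma conv1 (P Q S : A) (c : K) : P + Q - c *: S = 0 -> P = - Q + c *: S.
Proof.
move=> h; apply: (nc_eq0 (z := P + Q - c *: S)) => //.
by ncring_pre; repeat split; ring.
Qed.
Lemma conv2 (P B C : A) (c : K) : P = - B + c *: C -> P + B - c *: C = 0.
Proof.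
move=> ->; apply/eqP; rewrite subr_eq0 addrC addrA addrN add0r //.
Qed.
End Pure3.


Lemma prec_trans : transitive prec.
Proof. move=> [a b] [c d] [e f]; rewrite /prec /=; lia. Qed.
Lemma prec_irr p : prec p p = false.
Proof. by case: p => a b; rewrite /prec /= ltnn eqxx ltnn. Qed.

Section L.
Variable m : nat.
Definition seqk k := flatten [seq [seq (i, j) | i <- iota 1 m] | j <- rev (iota m.+1 k)].
Lemma seqk_S k : seqk k.+1 = [seq (i, (m.+1 + k)%N) | i <- iota 1 m] ++ seqk k.
Proof. by rewrite /seqk -[k.+1]addn1 iotaD rev_cat /=. Qed.
Lemma mem_seqk k a b : ((a, b) \in seqk k) = (1 <= a <= m)%N && (m < b <= m + k)%N.
Proof.
elim: k => [|k IH].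
  rewrite /seqk /= in_nil; symmetry; apply/negbTE; apply/negP; lia.
rewrite seqk_S mem_cat IH.
have -> : ((a, b) \in [seq (i, (m.+1 + k)%N) | i <- iota 1 m]) = (1 <= a <= m)%N && (b == m.+1 + k)%N.
  apply/mapP/andP => [[i hi [-> ->]]|[h1 /eqP ->]].
  - by rewrite mem_iota in hi; split => //; lia.
  - by exists a => //; rewrite mem_iota; lia.
apply/idP/idP => h; lia.
Qed.
Lemma pairwise_seqk k : pairwise prec (seqk k).
Proof.
elim: k => [|k IH]; first by [].
rewrite seqk_S pairwise_cat; apply/and3P; split => //.
  apply/allrelP => [[a b]] [c d] hx hy.
  move/mapP: hx => [i hi [-> ->]].
  rewrite mem_seqk in hy.
  rewrite /prec /=; lia.
rewrite pairwise_map.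
apply: (sub_pairwise (r := ltn)).
  by move=> x y /=; rewrite /prec /= ltnn eqxx.
by rewrite -sorted_pairwise ?iota_ltn_sorted //; exact: ltn_trans.
Qed.
End L.

Lemma I1seqE m n : I1seq m n = seqk m n.
Proof. by []. Qed.
Lemma mem_I1seq m n u : (u \in I1seq m n) = I1 m n u.
Proof. by case: u => a b; rewrite I1seqE mem_seqk /I1. Qed.
Lemma sorted_I1seq m n : sorted prec (I1seq m n).
Proof. by rewrite sorted_pairwise ?I1seqE ?pairwise_seqk //; exact: prec_trans. Qed.


Lemma qq_neq0 : qq != 0.
Proof. by rewrite /qq tofrac_eq0 polyX_eq0. Qed.
Lemma qq2_neq0 : 1 + qq ^+ 2 != 0.
Proof.
rewrite /qq -tofrac1 -tofracXn -tofracD tofrac_eq0.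
apply/eqP => h; have := congr1 (horner^~ 0) h.
by rewrite !hornerE expr0n /= addr0 => /eqP; rewrite oner_eq0.
Qed.
Lemma qqi_neq0 : qq^-1 != 0.
Proof. by rewrite invr_eq0 qq_neq0. Qed.
Lemma inv2_neq0 (K0 : fieldType) (x : K0) : x != 0 -> 1 + x ^+ 2 != 0 -> 1 + x^-1 ^+ 2 != 0.
Proof.
move=> hx h; apply/eqP => h'; move/eqP: h; apply.
have -> : 1 + x ^+ 2 = x ^+ 2 * (1 + x^-1 ^+ 2) by field.
by rewrite h' mulr0.
Qed.
Lemma qqi2_neq0 : 1 + qq^-1 ^+ 2 != 0.
Proof. exact: (inv2_neq0 qq_neq0 qq2_neq0). Qed.

Section Main.
Variables (m n : nat) (hm : (0 < m)%N) (hn : (0 < n)%N) (A : algType Cq) (K Ki E F : nat -> A).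
Hypothesis HU : Uq_rels m n K Ki E F.
Local Notation R i j := (Fij m F i j).
Local Notation N := (m + n)%N.
Local Notation sq := (qq + qq^-1).

Lemma Fm2 : F m * F m = 0.
Proof. by case: HU => _ [_ [_ [_ [[_ ->] _]]]]. Qed.
Lemma Ffar i j : (1 <= i < N)%N -> (1 <= j < N)%N -> (1 < i - j + (j - i))%N -> F i * F j = F j * F i.
Proof. by move=> hi hj hd; case: HU => _ [_ [_ [_ [_ [h _]]]]]; case: (h i j hi hj hd). Qed.
Lemma Fserre i j : (1 <= i < N)%N -> (1 <= j < N)%N -> (i - j + (j - i))%N = 1%N -> i != m ->
  F i * F i * F j - sq *: (F i * F j * F i) + F j * F i * F i = 0.
Proof. by move=> hi hj hd him; case: HU => _ [_ [_ [_ [_ [_ [h _]]]]]]; case: (h i j hi hj hd him). Qed.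
Lemma Fss : (1 < m)%N -> (1 < n)%N -> R m.-1 m.+2 * F m + F m * R m.-1 m.+2 = 0.
Proof. by move=> h1 h2; case: HU => _ [_ [_ [_ [_ [_ [_ h]]]]]]; case: (h h1 h2). Qed.

Lemma qi_le c : (c <= m)%N -> qi m c = qq.
Proof. by rewrite /qi => ->. Qed.
Lemma qi_gt c : (m < c)%N -> qi m c = qq^-1.
Proof. by move=> h; rewrite /qi leqNgt h. Qed.

Lemma R1 i : R i i.+1 = F i.
Proof. by rewrite /Fij subSnn. Qed.
Lemma Rrec i j : (i < j)%N -> R i j.+1 = br (R i j) (F j) (qi m j).
Proof.
move=> hij; rewrite /Fij.
have -> : (j.+1 - i - 1 = (j - i - 1).+1)%N by lia.
rewrite /=; have -> : (i + (j - i - 1).+1 = j)%N by lia.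
by [].
Qed.

Lemma Rstart i j : (1 <= i)%N -> (i.+1 < j)%N -> (j <= N)%N ->
  R i j = br (F i) (R i.+1 j) (qi m i.+1).
Proof.
move=> hi hij hj.
have [d hd] : exists d, j = (i + d + 2)%N by exists (j - i - 2)%N; lia.
rewrite hd; rewrite hd in hj; clear hij hd.
elim: d hj => [|d IH] hj.
  have -> : (i + 0 + 2 = (i.+1).+1)%N by lia.
  by rewrite Rrec // R1 R1.
have -> : (i + d.+1 + 2 = (i + d + 2).+1)%N by lia.
rewrite Rrec; last by lia.
rewrite IH; last by lia.
rewrite (Rrec (i := i.+1)); last by lia.
apply: br_assoc.
apply: Ffar; lia.
Qed.

Lemma Rfar c i j : (1 <= c < N)%N -> (1 <= i)%N -> (i < j)%N -> (j <= N)%N ->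
  (c.+1 < i)%N || (j < c)%N -> F c * R i j = R i j * F c.
Proof.
move=> hc hi hij hj hcij.
have [d hd] : exists d, j = (i + d + 1)%N by exists (j - i - 1)%N; lia.
rewrite hd; rewrite hd in hj hcij; clear hij hd.
elim: d hj hcij => [|d IH] hj hcij.
  rewrite addn0 addn1 R1; apply: Ffar => //; lia.
have -> : (i + d.+1 + 1 = (i + d + 1).+1)%N by lia.
rewrite Rrec; last by lia.
apply: br_comm1.
  apply: IH; lia.
apply: Ffar => //; lia.
Qed.

Lemma serre_start c j : (1 <= c)%N -> c != m -> (c.+1 < j)%N -> (j <= N)%N ->
  F c * F c * R c.+1 j - sq *: (F c * R c.+1 j * F c) + R c.+1 j * F c * F c = 0.
Proof.
move=> hc hcm hcj hj.
have [d hd] : exists d, j = (c + d + 2)%N by exists (j - c - 2)%N; lia.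
rewrite hd; rewrite hd in hj; clear hcj hd.
elim: d hj => [|d IH] hj.
  have -> : (c + 0 + 2 = c.+2)%N by lia.
  rewrite R1; apply: Fserre => //; lia.
have -> : (c + d.+1 + 2 = (c + d + 2).+1)%N by lia.
rewrite Rrec; last by lia.
apply: serre_brX; first by apply: IH; lia.
apply: Ffar; lia.
Qed.

Lemma serre_end c i : (c < N)%N -> c != m -> (1 <= i)%N -> (i < c)%N ->
  F c * F c * R i c - sq *: (F c * R i c * F c) + R i c * F c * F c = 0.
Proof.
move=> hc hcm hi hic.
have [d hd] : exists d, c = (i + d + 1)%N by exists (c - i - 1)%N; lia.
elim: d i hi hic hd => [|d IH] i hi hic hd.
  have hci : c = i.+1 by lia.
  clear hd; subst c.
  rewrite R1; apply: Fserre => //; lia.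
rewrite (Rstart (i:=i)); [|lia|lia|lia].
apply: serre_brY; first by apply: IH; lia.
apply: Ffar; lia.
Qed.

Lemma Rsq i k : (1 <= i <= m)%N -> (m < k <= N)%N -> R i k * R i k = 0.
Proof.
move=> hi hk.
have [d hd] : exists d, k = (m + d + 1)%N by exists (k - m - 1)%N; lia.
rewrite hd; rewrite hd in hk; clear hd.
elim: d hk => [|d IH] hk.
  rewrite addn0 addn1.
  have [e he] : exists e, m = (i + e)%N by exists (m - i)%N; lia.
  elim: e i hi he => [|e IHe] i hi he.
    have -> : i = m by lia.
    by rewrite R1 Fm2.
  rewrite (Rstart (i:=i)); [|lia|lia|lia].
  rewrite qi_le; last by lia.
  apply: (sq0a (a := qq) (s := sq)).
  - exact: qq_neq0.
  - exact: qq2_neq0.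
  - by [].
  - apply: IHe; lia.
  - apply: serre_start; lia.
have -> : (m + d.+1 + 1 = (m + d + 1).+1)%N by lia.
rewrite Rrec; last by lia.
rewrite qi_gt; last by lia.
apply: (sq0b (a := qq^-1) (s := sq)).
- exact: qqi_neq0.
- exact: qqi2_neq0.
- by rewrite invrK addrC.
- apply: IH; lia.
- apply: serre_end; lia.
Qed.

Lemma Rcol i s k : (1 <= i)%N -> (i < s)%N -> (s <= m)%N -> (m < k)%N -> (k <= N)%N ->
  R s k * R i k = (- qq) *: (R i k * R s k).
Proof.
move=> hi his hs hmk hk.
have [d hd] : exists d, s = (i + d + 1)%N by exists (s - i - 1)%N; lia.
elim: d i hi his hd => [|d IH] i hi his hd.
  rewrite (Rstart (i:=i)); [|lia|lia|lia].
  rewrite qi_le; last by lia.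
  have -> : i.+1 = s by lia.
  apply: colbase; apply: Rsq; lia.
rewrite (Rstart (i:=i)); [|lia|lia|lia].
rewrite -[- qq]mul1r; apply: br_comm.
  rewrite scale1r; apply/esym/Rfar; lia.
apply: IH; lia.
Qed.

Lemma Rrow i t k : (1 <= i <= m)%N -> (m < t)%N -> (t < k)%N -> (k <= N)%N ->
  R i t * R i k = (- qq) *: (R i k * R i t).
Proof.
move=> hi hmt htk hk.
have [d hd] : exists d, k = (t + d + 1)%N by exists (k - t - 1)%N; lia.
rewrite hd; rewrite hd in hk; clear htk hd.
elim: d hk => [|d IH] hk.
  rewrite addn0 addn1 Rrec; last by lia.
  rewrite qi_gt; last by lia.
  rewrite -[qq in - qq]invrK; apply: rowbase; [exact: qqi_neq0| apply: Rsq; lia].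
have -> : (t + d.+1 + 1 = (t + d + 1).+1)%N by lia.
rewrite Rrec; last by lia.
rewrite -[- qq]mulr1; apply: br_comm.
  apply: IH; lia.
rewrite scale1r; apply/esym/Rfar; lia.
Qed.

Definition sgn (b : bool) : Cq := if b then -1 else 1.

Lemma Rint c i k : (1 <= i)%N -> (i < c)%N -> (c.+1 < k)%N -> (k <= N)%N ->
  F c * R i k = sgn (c == m) *: (R i k * F c).
Proof.
case: c => [|c] hi hic hck hk; first by lia.
have base : forall k, (c.+2 < k)%N -> (k <= N)%N ->
    F c.+1 * R c k = sgn (c.+1 == m) *: (R c k * F c.+1).
  move=> k0 hck' hk'.
  have [d hd] : exists d, k0 = (c + d + 3)%N by exists (k0 - c - 3)%N; lia.
  rewrite hd; rewrite hd in hk'; clear hck' hd.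
  elim: d hk' => [|d IH] hk'.
    have -> : (c + 0 + 3 = c.+3)%N by lia.
    case: (eqVneq c.+1 m) => [hcm|hcm].
      rewrite hcm /sgn scaleN1r.
      have h := Fss.
      have e1 : c = m.-1 by lia.
      have e2 : c.+3 = m.+2 by lia.
      rewrite e1; apply/eqP; rewrite -addr_eq0 addrC; apply/eqP; apply: h; lia.
    rewrite /sgn scale1r.
    rewrite Rrec; last by lia.
    rewrite Rrec; last by lia.
    rewrite R1.
    have gen : forall a, a != 0 -> 1 + a ^+ 2 != 0 -> sq = a + a^-1 ->
        qi m c.+1 = a -> qi m c.+2 = a ->
        F c.+1 * br (br (F c) (F c.+1) (qi m c.+1)) (F c.+2) (qi m c.+2) =
        br (br (F c) (F c.+1) (qi m c.+1)) (F c.+2) (qi m c.+2) * F c.+1.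
      move=> a ha ha2 hs -> ->.
      apply: (g2base (s := sq)) => //.
      - apply: Fserre => //; lia.
      - apply: Fserre => //; lia.
      - apply: Ffar; lia.
    case: (ltnP c.+1 m) => hcm'.
      apply: gen; [exact: qq_neq0|exact: qq2_neq0|by []| |]; apply: qi_le; lia.
    apply: gen; [exact: qqi_neq0|exact: qqi2_neq0|by rewrite invrK addrC| |]; apply: qi_gt; lia.
  have -> : (c + d.+1 + 3 = (c + d + 3).+1)%N by lia.
  rewrite Rrec; last by lia.
  rewrite -[sgn _]mulr1; apply: br_comm.
    apply: IH; lia.
  rewrite scale1r; apply: Ffar; lia.
have [d hd] : exists d, c = (i + d)%N by exists (c - i)%N; lia.
elim: d i hi hic hd => [|d IH] i hi hic hd.
  rewrite hd addn0 in base *; apply: base; lia.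
rewrite (Rstart (i:=i)); [|lia|lia|lia].
rewrite -[sgn _]mul1r; apply: br_comm.
  rewrite scale1r; apply: Ffar; lia.
apply: IH; lia.
Qed.

Lemma Rinner i s t k : (1 <= i)%N -> (i < s)%N -> (s < t)%N -> (t < k)%N -> (k <= N)%N ->
  R s t * R i k = sgn ((s <= m)%N && (m < t)%N) *: (R i k * R s t).
Proof.
move=> hi his hst htk hk.
have [d hd] : exists d, t = (s + d + 1)%N by exists (t - s - 1)%N; lia.
rewrite hd; rewrite hd in htk; clear hst hd.
elim: d htk => [|d IH] htk.
  rewrite addn0 addn1 R1.
  rewrite (_ : (s <= m)%N && (m < s.+1)%N = (s == m)); last by rewrite ltnS -eqn_leq.
  apply: Rint; lia.
have -> : (s + d.+1 + 1 = (s + d + 1).+1)%N by lia.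
rewrite Rrec; last by lia.
rewrite (_ : sgn _ = sgn ((s <= m)%N && (m < s + d + 1)%N) * sgn (s + d + 1 == m)%N); last first.
  rewrite /sgn; do 3 (case: ifP => ?); rewrite ?mulr1 ?mul1r ?mulN1r ?opprK //; exfalso; lia.
apply: br_commL; [apply: IH; lia | apply: Rint; lia].
Qed.

Lemma Rnest i s t k : (1 <= i)%N -> (i < s)%N -> (s <= m)%N -> (m < t)%N -> (t < k)%N -> (k <= N)%N ->
  R s t * R i k = - (R i k * R s t).
Proof.
move=> hi his hs hmt htk hk.
rewrite (@Rinner i s t k) //; last by lia.
have hb : (s <= m)%N && (m < t)%N by apply/andP.
by rewrite /sgn hb scaleN1r.
Qed.

Local Notation kap := (qq - qq^-1).

Lemma Rcross_base s t k : (1 <= s)%N -> (s < m)%N -> (m < t)%N -> (t < k)%N -> (k <= N)%N ->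
  R s t * R s.+1 k + R s.+1 k * R s t - kap *: (R s.+1 t * R s k) = 0.
Proof.
move=> hs hsm hmt htk hk.
have [e he] : exists e, k = (t + e + 1)%N by exists (k - t - 1)%N; lia.
rewrite he; rewrite he in hk; clear htk he.
elim: e hk => [|e IH] hk.
  rewrite addn0 addn1.
  have hN := @Rnest s s.+1 t t.+1.
  have hX := @Rsq s.+1 t.
  rewrite !(Rrec (i := s) (j := t)) in hN *; try lia.
  rewrite !(Rrec (i := s.+1) (j := t)) in hN *; try lia.
  rewrite !(Rstart (i := s) (j := t)) in hN *; try lia.
  rewrite qi_le in hN *; last by lia.
  rewrite qi_gt in hN *; last by lia.
  apply: conv2.
  apply: crossbase.
  - exact: qq_neq0.
  - apply: hX; lia.
  - apply: Ffar; lia.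
  - by rewrite hN ?addNr //; lia.
have -> : (t + e.+1 + 1 = (t + e + 1).+1)%N by lia.
rewrite (Rrec (i := s.+1)); last by lia.
rewrite (Rrec (i := s)); last by lia.
apply: conv2; apply: cross_k.
- apply/esym/Rfar; lia.
- apply/esym/Rfar; lia.
- apply: IH; lia.
Qed.

Lemma Rcross s i t k : (1 <= s)%N -> (s < i)%N -> (i <= m)%N -> (m < t)%N -> (t < k)%N -> (k <= N)%N ->
  R s t * R i k + R i k * R s t - kap *: (R i t * R s k) = 0.
Proof.
move=> hs hsi him hmt htk hk.
have [d hd] : exists d, i = (s + d + 1)%N by exists (i - s - 1)%N; lia.
elim: d s hs hsi hd => [|d IH] s hs hsi hd.
  have -> : i = s.+1 by lia.
  apply: Rcross_base; lia.
rewrite (Rstart (i := s) (j := t)); [|lia|lia|lia].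
rewrite (Rstart (i := s) (j := k)); [|lia|lia|lia].
apply: conv2; apply: cross_s.
- apply: Rfar; lia.
- apply: Rfar; lia.
- apply: IH; lia.
Qed.

Lemma key_rel i k s t : I1 m n (i, k) -> I1 m n (s, t) -> prec (i, k) (s, t) ->
  exists x y, R s t * R i k = x * R s t + y * R i t /\ (y = 0 \/ (t < k)%N).
Proof.
rewrite /I1 /prec /= => /andP[/andP[hi1 hi2] /andP[hk1 hk2]] /andP[/andP[hs1 hs2] /andP[ht1 ht2]] hp.
case: (ltngtP t k) => htk.
- case: (ltngtP s i) => hsi.
  + exists (- R i k), (- (kap *: R s k)); split; last by right.
    have hc := @Rcross s i t k.
    have hne := @Rnest s i t k.
    rewrite (conv1 (hc _ _ _ _ _ _)); try lia.
    rewrite hne; try lia.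
    by rewrite mulNr scalerN scalerAl mulNr.
  + exists (- R i k), 0; rewrite mul0r addr0 mulNr; split; last by left.
    apply: Rnest; lia.
  + subst s; exists ((- qq) *: R i k), 0; rewrite mul0r addr0 -scalerAl; split; last by left.
    apply: Rrow; lia.
- exfalso; move: hp; rewrite ltnNge (ltnW htk) /= => /andP[/eqP h _]; lia.
- subst t; exists ((- qq) *: R i k), 0; rewrite mul0r addr0 -scalerAl; split; last by left.
  move: hp; rewrite ltnn eqxx /= => hp.
  apply: Rcol; lia.
Qed.

Lemma Rsq_I1 p : I1 m n p -> R p.1 p.2 * R p.1 p.2 = 0.
Proof. by case: p => a b; rewrite /I1 /= => /andP[h1 h2]; apply: Rsq. Qed.

Lemma main_list (l : seq (nat * nat)) : all (I1 m n) l -> sorted prec l ->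
  (forall v u, v \in l -> I1 m n u -> prec v u -> u \in l) ->
  forall r, r \in l -> R r.1 r.2 * \prod_(p <- l) R p.1 p.2 = 0.
Proof.
elim: l => [|[i k] l IH] //= /andP[Ip Il] hs hcl [s t].
have hp : all (prec (i, k)) l := order_path_min prec_trans hs.
have hcl' : forall v u, v \in l -> I1 m n u -> prec v u -> u \in l.
  move=> v u hv hu hvu.
  have := hcl v u; rewrite !inE hv orbT => /(_ isT hu hvu) /orP[/eqP hup|//].
  subst u; have hpv := allP hp v hv.
  by have := prec_trans hpv hvu; rewrite prec_irr.
have IH' := IH Il (path_sorted hs) hcl'.
rewrite big_cons inE => /orP[/eqP [-> ->]|hr].
  by rewrite mulrA (Rsq_I1 Ip) mul0r.
have hpr : prec (i, k) (s, t) := allP hp _ hr.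
have Ir := allP Il _ hr.
have [x [y [e hy]]] := key_rel Ip Ir hpr.
rewrite mulrA e mulrDl -!mulrA (IH' _ hr) mulr0 add0r.
case: hy => [->|htk]; first by rewrite mul0r.
have hit : (i, t) \in l.
  have := hcl (i, k) (i, t); rewrite inE eqxx /=.
  have hI : I1 m n (i, t) by move: Ip Ir; rewrite /I1 /=; lia.
  have hpi : prec (i, k) (i, t) by rewrite /prec /= htk.
  move=> /(_ isT hI hpi); rewrite inE => /orP[/eqP [] h|//]; lia.
by rewrite (IH' _ hit) mulr0.
Qed.

Lemma Fprod_zero (P : pred (nat * nat)) : (forall v u, P v -> prec v u -> P u) ->
  forall s t, I1 m n (s, t) -> P (s, t) -> R s t * Fprod m n F P = 0.
Proof.
move=> hP s t hst hPst.
rewrite /Fprod -big_filter.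
apply: (@main_list _ _ _ _ (s, t)).
- by apply/allP => u; rewrite mem_filter mem_I1seq => /andP[_ ->].
- apply: sorted_filter; [exact: prec_trans | exact: sorted_I1seq].
- move=> v u; rewrite !mem_filter !mem_I1seq => /andP[hv _] hu hvu.
  by rewrite hu (hP v u) //.
- by rewrite mem_filter mem_I1seq hPst.
Qed.
End Main.

Unset Implicit Arguments.
Theorem lemma5p2 (m n : nat) (hm : (0 < m)%N) (hn : (0 < n)%N)
    (A : algType Cq) (K Ki E F : nat -> A) :
  Uq_rels m n K Ki E F ->
  forall i k : nat, I1 m n (i, k) ->
    (forall s t : nat, I1 m n (s, t) -> preceq (i, k) (s, t) ->
       Fij m F s t * Fge m n F (i, k) = 0) /\
    (forall s t : nat, I1 m n (s, t) -> prec (i, k) (s, t) ->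
       Fij m F s t * Fgt m n F (i, k) = 0).
Proof.
move=> HU i k hik; split.
- move=> s t hst hp; rewrite /Fge; apply: (Fprod_zero hm hn HU) => // v u.
  rewrite /preceq => /orP[/eqP <-|h] hvu; apply/orP; right => //.
  exact: prec_trans h hvu.
- move=> s t hst hp; rewrite /Fgt; apply: (Fprod_zero hm hn HU) => // v u h hvu.
  exact: prec_trans h hvu.
Qed.
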